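(* For every cubic graph $G$ that contains a perfect matching, $\nu_2(G) \geq \frac{5}{6}\cdot |V(G)|$.
   Context: Graphs are finite, without loops, possibly with multiple edges; a graph is cubic if every vertex has degree $3$. For $k\geq 1$, $\nu_k(G)$ is the maximum number of edges of a $k$-edge-colorable subgraph of $G$. *)

(* Defs.v *)
From mathcomp Require Import all_boot.
Set Implicit Arguments. Unset Strict Implicit. Unset Printing Implicit Defensive.

(* Parallel edges are allowed (distinct edges may have equal ends). *)

Section Multigraph.
Variables (V E : finType) (ends : E -> {set V}).

Definition loopless : Prop := forall e : E, #|ends e| = 2.

Definition incident (v : V) : {set E} := [set e | v \in ends e].

(* degree = number of incident edges (no loops, so each counts once) *)
Definition cubic : Prop := forall v : V, #|incident v| = 3.

Definition perfect_matching (M : {set E}) : Prop :=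
  forall v : V, #|M :&: incident v| = 1.

Definition has_perfect_matching : Prop := exists M, perfect_matching M.

Definition adjacent (e f : E) : bool :=
  (e != f) && [exists v, (v \in ends e) && (v \in ends f)].

Definition k_edge_colorable (k : nat) (F : {set E}) : bool :=
  [exists c : {ffun E -> 'I_k},
    [forall e in F, forall f in F, adjacent e f ==> (c e != c f)]].

Definition nu (k : nat) : nat :=
  \max_(F : {set E} | k_edge_colorable k F) #|F|.

End Multigraph.

(* Main.v *)
Require Import Defs.
From mathcomp Require Import all_boot zify.
Set Implicit Arguments. Unset Strict Implicit.

Section Proof.
Variables (V E : finType) (ends : E -> {set V}).

Lemma dcount (S : {set E}) :
  \sum_(v : V) #|S :&: incident ends v| = \sum_(e in S) #|ends e|.
Proof.
transitivity (\sum_(v : V) \sum_(e in S) ((v \in ends e) : nat)).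
  apply: eq_bigr => v _; rewrite -sum1_card big_mkcond [RHS]big_mkcond /=.
  apply: eq_bigr => e _; rewrite !inE.
  by case: (e \in S); case: (v \in ends e).
rewrite exchange_big; apply: eq_bigr => e _.
rewrite -sum1_card [RHS]big_mkcond /=; apply: eq_bigr => v _.
by case: (v \in ends e).
Qed.

Definition matchH (H : {set E}) (F : {set E}) : bool :=
  (F \subset H) && [forall v, #|F :&: incident ends v| <= 1].

Lemma sum_in (A B : {set E}) : \sum_(x in A) ((x \in B) : nat) = #|A :&: B|.
Proof.
rewrite -sum1_card big_mkcond [RHS]big_mkcond /=; apply: eq_bigr => e _.
by rewrite !inE; case: (e \in A); case: (e \in B).
Qed.

End Proof.

Theorem lemma1 (V E : finType) (ends : E -> {set V}) :
  loopless ends -> cubic ends -> has_perfect_matching ends ->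
  5 * #|V| <= 6 * nu ends 2.
Proof.
move=> hl hc [M hM].
set H := ~: M.
have hMv v : #|M :&: incident ends v| = 1 by apply: hM.
have hHv v : #|H :&: incident ends v| = 2.
  have := cardsID M (incident ends v); rewrite hc setIC hMv.
  rewrite setDE setIC => /eqP; rewrite -(eqn_add2l 1) => /eqP [<-] //.
have cardM : #|V| = 2 * #|M|.
  have := dcount ends M.
  rewrite (eq_bigr (fun _ => 1)); last by move=> v _; exact: hMv.
  rewrite sum1_card.
  rewrite (eq_bigr (fun _ => 2)); last by move=> e _; exact: hl.
  by rewrite sum_nat_const mulnC => <-.
have cardH : #|V| = #|H|.
  have := dcount ends H.
  rewrite (eq_bigr (fun _ => 2)); last by move=> v _; exact: hHv.
  rewrite [RHS](eq_bigr (fun _ => 2)); last by move=> e _; exact: hl.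
  rewrite !sum_nat_const => /eqP; rewrite eqn_mul2r /= => /eqP <-.
  by apply: eq_card.
have m0 : matchH ends H set0.
  apply/andP; split; first exact: sub0set.
  by apply/forallP => v; rewrite set0I cards0.
case: (@arg_maxnP _ set0 (matchH ends H) (fun F : {set E} => #|F|) m0) => F mF maxF.
have /andP [FH Fm] := mF.
have Fmv v : #|F :&: incident ends v| <= 1 by exact: (forallP Fm v).
pose N f := [set h | [exists w, (w \in ends f) && (w \in ends h)]].
have cover h : h \in H -> [exists f in F, h \in N f].
  move=> hH; case: (boolP [exists f in F, h \in N f]) => // /existsPn nF.
  have nFw f w : f \in F -> w \in ends f -> w \in ends h -> False.
    move=> fF wf wh; have := nF f; rewrite fF /= inE => /existsPn /(_ w).
    by rewrite wf wh.
  have hF : h \notin F.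
    apply/negP => hF; have /cards2P : #|ends h| == 2 by apply/eqP; apply: hl.
    case=> u [v [_ ev]].
    by apply: (nFw h u hF); rewrite ev !inE eqxx.
  have m' : matchH ends H (h |: F).
    apply/andP; split; first by rewrite subUset sub1set hH FH.
    apply/forallP => v; rewrite setIUl.
    apply: leq_trans (leq_card_setU _ _) _.
    case: (boolP (v \in ends h)) => vh.
      have -> : F :&: incident ends v = set0.
        apply/setP => f; rewrite !inE; apply/negP => /andP [fF vf].
        exact: (nFw f v fF vf vh).
      rewrite cards0 addn0; apply: leq_trans (subset_leq_card (subsetIl _ _)) _.
      by rewrite cards1.
    have -> : [set h] :&: incident ends v = set0.
      apply/setP => f; rewrite !inE; apply/negP => /andP [/eqP -> ].
      by rewrite (negbTE vh).
    by rewrite cards0 add0n.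
  have := maxF _ m'; rewrite cardsU1 hF /=.
  by rewrite ltnn.
have Nf f : f \in F -> #|H :&: N f| <= 3.
  move=> fF; have fH : f \in H by apply: (subsetP FH).
  have /cards2P : #|ends f| == 2 by apply/eqP; apply: hl.
  case=> u [v [uv ef]].
  have sub : H :&: N f \subset (H :&: incident ends u) :|: (H :&: incident ends v).
    apply/subsetP => h; rewrite !inE => /andP [-> /existsP [w /andP [wf wh]]].
    by move: wf; rewrite ef !inE => /orP [] /eqP <-; rewrite wh ?orbT.
  apply: leq_trans (subset_leq_card sub) _.
  rewrite cardsU !hHv.
  have : f \in (H :&: incident ends u) :&: (H :&: incident ends v).
    by rewrite !in_setI fH /= !inE ef !inE !eqxx ?orbT.
  move=> fi; have : 0 < #|(H :&: incident ends u) :&: (H :&: incident ends v)|.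
    by apply/card_gt0P; exists f.
  move: (#|_ :&: _|) => k; lia.
have cardHF : #|H| <= 3 * #|F|.
  rewrite -sum1_card.
  apply: (@leq_trans (\sum_(h in H) \sum_(f in F) ((h \in N f) : nat))).
    apply: leq_sum => h hH; have /existsP [f /andP [fF hN]] := cover h hH.
    by rewrite (bigD1 f) //= hN.
  rewrite exchange_big /= -sum1_card big_distrr /=.
  apply: leq_sum => f fF; rewrite muln1 sum_in; exact: Nf.
pose S := M :|: F.
have MF : M :&: F = set0.
  apply/setP => e; rewrite !inE; apply/negP => /andP [eM eF].
  by have := subsetP FH e eF; rewrite inE eM.
have cardS : #|S| = #|M| + #|F|.
  by have := cardsUI M F; rewrite MF cards0 addn0.
have colS : k_edge_colorable ends 2 S.
  apply/existsP; exists [ffun e => if e \in M then (ord0 : 'I_2) else ord_max].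
  apply/forall_inP => e eS; apply/forall_inP => f fS; apply/implyP.
  case/andP => nef /existsP [w /andP [we wf]].
  rewrite !ffunE.
  have Mw : forall X : {set E}, #|X :&: incident ends w| <= 1 -> e \in X -> f \in X -> False.
    move=> X hX eX fX; move/card_le1_eqP: hX => hX.
    have := hX e f; rewrite !inE eX fX we wf => /(_ isT isT) eqef.
    by rewrite eqef eqxx in nef.
  case eM: (e \in M); case fM: (f \in M) => //.
    by exfalso; apply: (Mw M) => //; rewrite hMv.
  exfalso; apply: (Mw F (Fmv w)).
    by move: eS; rewrite inE eM.
  by move: fS; rewrite inE fM.
have := @leq_bigmax_cond _ (k_edge_colorable ends 2) (fun F : {set E} => #|F|) S colS.
rewrite -/(nu ends 2) => hnu.
lia.
Qed.
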